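(* Assume the environments are defined by a class of linear spurious correlation latent SCMs $\mathcal{M}_\mathcal{E}$, and let $e^+$ be any test domain with $\mathcal{M}_{e^+}\in\mathcal{M}_\mathcal{E}$. Let $\theta\in\mathbb{R}^d$ satisfy the NCM constraint $\theta^\top\tilde{Q}_r=0$. Then: (a) for logistic regression with log loss $\ell_{\mathrm{LL}}$, $$\mathbb{E}_{({\mathbf{x}}_{e^+},{\textnormal{y}}_{e^+})\sim\mathbb{P}_{\mathrm{test}}}[\ell_{\mathrm{LL}}(\theta^\top{\mathbf{x}}_{e^+},{\textnormal{y}}_{e^+})]\le\mathbb{E}_{({\mathbf{x}},{\textnormal{y}})\sim\mathbb{P}_{\mathrm{train}}}[\ell_{\mathrm{LL}}(\theta^\top{\mathbf{x}},{\textnormal{y}})]+\|\theta\|\,\big\|\tilde{Q}_{r,\perp}^\top Q\,\Lambda^{1/2}\big\|;$$ (b) for linear regression with squared error loss $\ell_{\mathrm{SE}}$, $$\mathbb{E}_{({\mathbf{x}}_{e^+},{\textnormal{y}}_{e^+})\sim\mathbb{P}_{\mathrm{test}}}[\ell_{\mathrm{SE}}(\theta^\top{\mathbf{x}}_{e^+},{\textnormal{y}}_{e^+})]\le 2\,\mathbb{E}_{({\mathbf{x}},{\textnormal{y}})\sim\mathbb{P}_{\mathrm{train}}}[\ell_{\mathrm{SE}}(\theta^\top{\mathbf{x}},{\textnormal{y}})]+2\|\theta\|^2\big\|\tilde{Q}_{r,\perp}^\top Q\,\Lambda^{1/2}\big\|^2.$$ Furthermore, with $s:=\min\{r,|\mathcal{I}(\mathcal{F}_\mathcal{E})|\}$,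 $$\big\|\tilde{Q}_{r,\perp}^\top Q\,\Lambda^{1/2}\big\|^2\le\lambda_1(e^+)\,\mathrm{dist}^2(\tilde{Q}_s,Q_s)+\lambda_{s+1}(e^+).$$
   Context: Setting. $\mathcal{E}$ is a set of domains; each domain $e$ has an SCM $\mathcal{M}_e$, all sharing the same exogenous noise ${\mathbf{u}}\sim\mathbb{P}_\mathcal{U}$, latent variables ${\mathbf{z}}$, observed input ${\mathbf{x}}\in\mathbb{R}^d$ and target ${\textnormal{y}}$. Latent mechanisms $f_{e,i}$ may depend on $e$; write $f_e$ for the induced solution map ${\bm{u}}\mapsto{\bm{z}}$. The observed mechanisms are shared across domains: ${\mathbf{x}}_e=g_{\mathbf{x}}(f_e({\mathbf{u}}))$ with $g_{\mathbf{x}}$ linear, and ${\textnormal{y}}=g_{\textnormal{y}}({\mathbf{z}})$ with $g_{\textnormal{y}}$ linear (linear regression) or the sign of a linear function, ${\textnormal{y}}\in\{-1,1\}$ (logistic regression); the SCMs are linear. The intervention set is $\mathcal{I}(\mathcal{F}_\mathcal{E})=\{i:f_{e,i}\neq f_{e',i}\text{ for some }e,e'\in\mathcal{E}\}$, and the spurious correlation assumption is that no $i\in\mathcal{I}(\mathcal{F}_\mathcal{E})$ is an ancestor of ${\textnormal{y}}$. Training domains $\mathcal{E}_{\mathrm{train}}\subseteq\mathcal{E}$ have weights $\mathbb{P}(e)$, and $\mathbb{P}_{\mathrm{train}}=\sum_{e\in\mathcal{E}_{\mathrm{train}}}\mathbb{P}(e)\mathbb{P}_e$; $\mathbb{P}_{\mathrm{test}}$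 is the distribution of domain $e^+$. For the same noise ${\mathbf{u}}$ define ${\mathbf{x}}_{e^+}=g_{\mathbf{x}}(f_{e^+}({\mathbf{u}}))$ and ${\mathbf{x}}_{e^+\to e}=g_{\mathbf{x}}(f_e({\mathbf{u}}))$. Let $M_{e^+}:=\sum_{e\in\mathcal{E}_{\mathrm{train}}}\mathbb{P}(e)\,\mathbb{E}_{\mathbf{u}}[({\mathbf{x}}_{e^+}-{\mathbf{x}}_{e^+\to e})({\mathbf{x}}_{e^+}-{\mathbf{x}}_{e^+\to e})^\top]=Q\Lambda Q^\top$, where $Q\in\mathbb{R}^{d\times|\mathcal{I}(\mathcal{F}_\mathcal{E})|}$ has orthonormal columns and $\Lambda$ is diagonal with the eigenvalues $\lambda_1(e^+)\ge\lambda_2(e^+)\ge\dots$ of $M_{e^+}$ (eigenvalues beyond index $|\mathcal{I}(\mathcal{F}_\mathcal{E})|$ are zero); $Q_s$ denotes the first $s$ columns of $Q$ and $\lambda_j(e^+)$ the $j$-th largest eigenvalue of $M_{e^+}$. NCM: given $k$ (possibly noisy) counterfactual pairs $({\bm{x}}_{e_j},{\bm{x}}_{e'_j})$, let $\tilde{\Delta}_{\mathbf{x}}=[{\bm{x}}_{e_1}-{\bm{x}}_{e'_1},\dots,{\bm{x}}_{e_k}-{\bm{x}}_{e'_k}]\in\mathbb{R}^{d\times k}$; $\tilde{Q}_r\in\mathbb{R}^{d\times r}$ is the matrix of left singular vectors for the $r$ largest singular values of $\tilde{\Delta}_{\mathbf{x}}$ (similarly $\tilde{Q}_s$), and $\tilde{Q}_{r,\perp}\in\mathbb{R}^{d\times(d-r)}$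 is an orthonormal basis of the orthogonal complement of its column space. Predictions are $\theta^\top{\mathbf{x}}$; $\ell_{\mathrm{LL}}(t,y)=\log(1+e^{-yt})$, $\ell_{\mathrm{SE}}(t,y)=(t-y)^2$. $\|\cdot\|$ is the Euclidean/spectral norm, and $\mathrm{dist}(Q,Q'):=\|QQ^\top-Q'Q'^\top\|$. *)

(* Defs.v *)
From HB Require Import structures.
From mathcomp Require Import all_boot all_order all_algebra.
From mathcomp Require Import all_classical all_reals all_analysis.
Set Implicit Arguments. Unset Strict Implicit. Unset Printing Implicit Defensive.
Import Order.TTheory GRing.Theory Num.Theory.
Local Open Scope ring_scope.
Local Open Scope classical_set_scope.

Section Defs.
Variable R : realType.

Definition vnorm n (x : 'cV[R]_n) : R := Num.sqrt (\sum_i x i 0 ^+ 2).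

Definition opnorm m n (A : 'M[R]_(m, n)) : R :=
  sup [set vnorm (A *m x) | x in [set x : 'cV[R]_n | vnorm x <= 1]].

Definition sdist m n (Q Q' : 'M[R]_(m, n)) : R :=
  opnorm (Q *m Q^T - Q' *m Q'^T).

Definition dotv n (x y : 'cV[R]_n) : R := (x^T *m y) 0 0.

(* the linear latent mechanism f_{e,i}(z, u_i) = sum_j A_e(i,j) z_j + b_e(i) u_i
   (A_e supported on the parents of i, see the theorem's hypotheses) *)
Definition mech m (A : 'M[R]_m) (b : 'I_m -> R) (i : 'I_m) : 'cV[R]_m -> R -> R :=
  fun z ui => \sum_j A i j * z j 0 + b i * ui.

Definition intervened (E : Type) m (A : E -> 'M[R]_m) (B : E -> 'I_m -> R)
    (i : 'I_m) : Prop :=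
  exists e e', mech (A e) (B e) i <> mech (A e') (B e') i.

Definition interv_set (E : Type) m (A : E -> 'M[R]_m) (B : E -> 'I_m -> R)
  : {set 'I_m} := [set i | `[< intervened A B i >] ].

(* sign with values in {-1, 1} (convention: sign 0 = 1) *)
Definition sgn1 (t : R) : R := if 0 <= t then 1 else -1.

Definition lossLL (t y : R) : R := ln (1 + expR (- (y * t))).
Definition lossSE (t y : R) : R := (t - y) ^+ 2.

Definition firstcols m n s (h : (s <= n)%N) (Q : 'M[R]_(m, n)) : 'M[R]_(m, s) :=
  colsub (fun j : 'I_s => widen_ord h j) Q.

End Defs.

(* i is an ancestor of y: there is a path i -> ... -> j in the latent DAG
   (pa a b means "a is a parent of b") with j a parent of y *)
Definition anc_y m (pa : rel 'I_m) (pay : pred 'I_m) (i : 'I_m) : bool :=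
  [exists j, pay j && connect pa i j].

(* Main.v *)
Require Import Defs.
From HB Require Import structures.
From mathcomp Require Import all_boot all_order all_algebra.
From mathcomp Require Import all_classical all_reals all_analysis.
From mathcomp Require Import ring lra.
From mathcomp Require Import measurable_realfun.
From Stdlib Require Import Classical_Prop.
Set Implicit Arguments. Unset Strict Implicit. Unset Printing Implicit Defensive.
Import Order.TTheory GRing.Theory Num.Theory.
Local Open Scope ring_scope.
Local Open Scope classical_set_scope.
Section LinA.
Variable R : realType.
Implicit Types (n : nat).

Lemma vnorm_ge0 n (x : 'cV[R]_n) : 0 <= vnorm x.
Proof. exact: sqrtr_ge0. Qed.

Lemma sumsq_ge0 n (x : 'cV[R]_n) : 0 <= \sum_i x i 0 ^+ 2.
Proof. by apply: sumr_ge0 => i _; exact: sqr_ge0. Qed.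

Lemma vnorm_sqr n (x : 'cV[R]_n) : vnorm x ^+ 2 = \sum_i x i 0 ^+ 2.
Proof. by rewrite /vnorm sqr_sqrtr // sumsq_ge0. Qed.

Lemma dotvE n (x y : 'cV[R]_n) : dotv x y = \sum_i x i 0 * y i 0.
Proof. by rewrite /dotv mxE; apply: eq_bigr => i _; rewrite mxE. Qed.

Lemma dotvv n (x : 'cV[R]_n) : dotv x x = vnorm x ^+ 2.
Proof. by rewrite dotvE vnorm_sqr; apply: eq_bigr => i _; rewrite expr2. Qed.

Lemma vnorm_eq0 n (x : 'cV[R]_n) : vnorm x = 0 -> x = 0.
Proof.
move=> h; have : \sum_i x i 0 ^+ 2 = 0 by rewrite -vnorm_sqr h expr0n.
move/psumr_eq0P => H; apply/matrixP => i j; rewrite (ord1 j) mxE.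
have /eqP := H (fun i _ => sqr_ge0 (x i 0)) i isT; by rewrite sqrf_eq0 => /eqP.
Qed.

Lemma vnormZ n a (x : 'cV[R]_n) : vnorm (a *: x) = `|a| * vnorm x.
Proof.
rewrite /vnorm -sqrtr_sqr -sqrtrM ?sqr_ge0 //; congr Num.sqrt.
by rewrite mulr_sumr; apply: eq_bigr => i _; rewrite mxE exprMn.
Qed.

Lemma vnormN n (x : 'cV[R]_n) : vnorm (- x) = vnorm x.
Proof. by rewrite -scaleN1r vnormZ normrN normr1 mul1r. Qed.

Lemma dotv_sym n (x y : 'cV[R]_n) : dotv x y = dotv y x.
Proof. by rewrite !dotvE; apply: eq_bigr => i _; rewrite mulrC. Qed.

Lemma dotv_am n (x y : 'cV[R]_n) : 2 * dotv x y <= vnorm x ^+ 2 + vnorm y ^+ 2.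
Proof.
rewrite !vnorm_sqr dotvE mulr_sumr -big_split /=; apply: ler_sum => i _.
have := sqr_ge0 (x i 0 - y i 0); lra.
Qed.

Lemma CS n (x y : 'cV[R]_n) : dotv x y <= vnorm x * vnorm y.
Proof.
have [hx|hx] := eqVneq (vnorm x) 0.
  by rewrite (vnorm_eq0 hx) dotvE big1 ?mul0r ?mulr_ge0 ?vnorm_ge0 // => i _; rewrite mxE mul0r.
have [hy|hy] := eqVneq (vnorm y) 0.
  by rewrite (vnorm_eq0 hy) dotvE big1 ?mulr0 ?mulr_ge0 ?vnorm_ge0 // => i _; rewrite mxE mulr0.
have px : 0 < vnorm x by rewrite lt_def hx vnorm_ge0.
have py : 0 < vnorm y by rewrite lt_def hy vnorm_ge0.
have := dotv_am ((vnorm x)^-1 *: x) ((vnorm y)^-1 *: y).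
rewrite !vnormZ !ger0_norm ?invr_ge0 ?vnorm_ge0 // !mulVf //.
have -> : dotv ((vnorm x)^-1 *: x) ((vnorm y)^-1 *: y) =
   dotv x y / (vnorm x * vnorm y).
  rewrite !dotvE mulr_suml; apply: eq_bigr => i _; rewrite !mxE invfM; ring.
rewrite expr1n => h.
have : dotv x y / (vnorm x * vnorm y) <= 1 by lra.
by rewrite ler_pdivrMr ?mulr_gt0 // mul1r.
Qed.

End LinA.
Section LinB.
Variable R : realType.

Lemma sqr_sum_ge (I : Type) (s : seq I) (a : I -> R) :
  (forall i, 0 <= a i) -> \sum_(i <- s) a i ^+ 2 <= (\sum_(i <- s) a i) ^+ 2.
Proof.
move=> a0; elim: s => [|x s IH]; first by rewrite !big_nil expr0n.
rewrite !big_cons.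
have hS : 0 <= \sum_(i <- s) a i by apply: sumr_ge0.
have := a0 x; nra.
Qed.

Lemma vnorm_l1 n (y : 'cV[R]_n) : vnorm y <= \sum_i `|y i 0|.
Proof.
rewrite /vnorm -(ger0_norm (sumr_ge0 _ (fun i _ => normr_ge0 (y i 0)))).
rewrite -sqrtr_sqr ler_sqrt ?sqr_ge0 //.
have := sqr_sum_ge (index_enum 'I_n) (fun i => normr_ge0 (y i 0)).
apply: le_trans; apply: ler_sum => i _; by rewrite real_normK ?num_real.
Qed.

Lemma coord_le n (x : 'cV[R]_n) i : `|x i 0| <= vnorm x.
Proof.
rewrite /vnorm -sqrtr_sqr ler_sqrt ?sumsq_ge0 //.
rewrite (bigD1 i) //= lerDl; apply: sumr_ge0 => j _; exact: sqr_ge0.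
Qed.

Definition opset m n (A : 'M[R]_(m, n)) :=
  [set vnorm (A *m x) | x in [set x : 'cV[R]_n | vnorm x <= 1]].

Lemma opset_sup m n (A : 'M[R]_(m, n)) : has_sup (opset A).
Proof.
split.
  exists (vnorm (A *m 0)), 0 => //=.
  by rewrite /vnorm big1 ?sqrtr0 // => i _; rewrite mxE expr0n.
exists (\sum_i \sum_j `|A i j|) => _ [x /= hx <-].
apply: le_trans (vnorm_l1 _) _; apply: ler_sum => i _.
rewrite mxE; apply: le_trans (ler_norm_sum _ _ _) _; apply: ler_sum => j _.
rewrite normrM ler_piMr //; apply: le_trans (coord_le _ _) hx.
Qed.

Lemma opnorm_ge0 m n (A : 'M[R]_(m, n)) : 0 <= opnorm A.
Proof.
have := sup_upper_bound (opset_sup A); apply.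
exists 0 => /=; first by rewrite /vnorm big1 ?sqrtr0 // => i _; rewrite mxE expr0n.
by rewrite mulmx0 /vnorm big1 ?sqrtr0 // => i _; rewrite mxE expr0n.
Qed.

Lemma opnorm_ub1 m n (A : 'M[R]_(m, n)) x : vnorm x <= 1 -> vnorm (A *m x) <= opnorm A.
Proof. by move=> hx; apply: (sup_upper_bound (opset_sup A)); exists x. Qed.

Lemma opnorm_ub m n (A : 'M[R]_(m, n)) x : vnorm (A *m x) <= opnorm A * vnorm x.
Proof.
have [hx|hx] := eqVneq (vnorm x) 0.
  rewrite hx (vnorm_eq0 hx) mulmx0 mulr0 /vnorm big1 ?sqrtr0 // => i _.
  by rewrite mxE expr0n.
have px : 0 < vnorm x by rewrite lt_def hx vnorm_ge0.
have := opnorm_ub1 A (x := (vnorm x)^-1 *: x).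
rewrite vnormZ ger0_norm ?invr_ge0 ?vnorm_ge0 // mulVf // lexx => /(_ isT).
rewrite -scalemxAr vnormZ ger0_norm ?invr_ge0 ?vnorm_ge0 //.
by rewrite mulrC ler_pdivrMr.
Qed.

Lemma opnorm_le m n (A : 'M[R]_(m, n)) c : 0 <= c ->
  (forall x, vnorm (A *m x) <= c * vnorm x) -> opnorm A <= c.
Proof.
move=> c0 h; apply: ge_sup; first by case: (opset_sup A).
move=> _ [x /= hx <-]; apply: le_trans (h x) _.
by rewrite -{2}(mulr1 c) ler_wpM2l.
Qed.

Lemma dotv_mul m n (A : 'M[R]_(m, n)) x y : dotv (A *m x) y = dotv x (A^T *m y).
Proof. by rewrite /dotv trmx_mul !mulmxA. Qed.

Lemma tr_bound m n (A : 'M[R]_(m, n)) K : 0 <= K ->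
  (forall z, vnorm (A^T *m z) <= K * vnorm z) ->
  forall x, vnorm (A *m x) <= K * vnorm x.
Proof.
move=> K0 h x.
have [h0|h0] := eqVneq (vnorm (A *m x)) 0.
  by rewrite h0 mulr_ge0 ?vnorm_ge0.
have p0 : 0 < vnorm (A *m x) by rewrite lt_def h0 vnorm_ge0.
have e : vnorm (A *m x) ^+ 2 <= vnorm x * (K * vnorm (A *m x)).
  rewrite -dotvv dotv_mul; apply: le_trans (CS _ _) _.
  by rewrite ler_wpM2l ?vnorm_ge0.
rewrite -(ler_pM2r p0).
have -> : K * vnorm x * vnorm (A *m x) = vnorm x * (K * vnorm (A *m x)) by ring.
by rewrite -expr2.
Qed.

End LinB.
Section LinC.
Variable R : realType.

Lemma iso_norm m n (Q : 'M[R]_(m, n)) w : Q^T *m Q = 1%:M -> vnorm (Q *m w) = vnorm w.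
Proof.
move=> hQ.
have : vnorm (Q *m w) ^+ 2 = vnorm w ^+ 2 by rewrite -!dotvv dotv_mul mulmxA hQ mul1mx.
by move/eqP; rewrite eqrXn2 ?vnorm_ge0 // => /eqP.
Qed.

Lemma bessel m n (Q : 'M[R]_(m, n)) v : Q^T *m Q = 1%:M -> vnorm (Q^T *m v) <= vnorm v.
Proof.
move=> hQ.
have [h0|h0] := eqVneq (vnorm (Q^T *m v)) 0; first by rewrite h0 vnorm_ge0.
have p0 : 0 < vnorm (Q^T *m v) by rewrite lt_def h0 vnorm_ge0.
have e : vnorm (Q^T *m v) ^+ 2 <= vnorm v * vnorm (Q^T *m v).
  rewrite -dotvv dotv_mul trmxK.
  by apply: le_trans (CS _ _) _; rewrite iso_norm.
by rewrite -(ler_pM2r p0) -expr2.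
Qed.

Lemma span0 d r (Qr : 'M[R]_(d, r)) (Qp : 'M[R]_(d, d - r)) (v : 'cV[R]_d) :
  Qr^T *m Qr = 1%:M -> Qp^T *m Qp = 1%:M -> Qr^T *m Qp = 0 ->
  Qr^T *m v = 0 -> Qp^T *m v = 0 -> v = 0.
Proof.
move=> h1 h2 h3 h4 h5.
pose V := col_mx Qr^T Qp^T.
have hV : V *m V^T = 1%:M.
  rewrite tr_col_mx !trmxK mul_col_row h1 h2 h3.
  have -> : Qp^T *m Qr = 0 by rewrite -(trmxK (Qp^T *m Qr)) trmx_mul trmxK h3 trmx0.
  by rewrite -scalar_mx_block.
have fV : row_full V.
  rewrite /row_full eqn_leq rank_leq_col /=.
  have := mxrankM_maxl V V^T; rewrite hV mxrank1; apply: leq_trans.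
  by rewrite -leq_subLR.
move/row_fullP: fV => [Bm hB].
by rewrite -(mul1mx v) -hB -mulmxA /V mul_col_mx h4 h5 col_mx0 mulmx0.
Qed.

End LinC.
Section PartC.
Variable R : realType.

Lemma lam_mono (lam : nat -> R) : (forall j, lam j.+1 <= lam j) ->
  forall i j, (i <= j)%N -> lam j <= lam i.
Proof.
move=> h i j /subnKC <-; elim: (j - i)%N => [|n IH]; first by rewrite addn0.
by rewrite addnS; apply: le_trans (h _) IH.
Qed.

Lemma firstcols_trmul m n s (h : (s <= n)%N) (Q : 'M[R]_(m, n)) (v : 'cV[R]_m) :
  (firstcols h Q)^T *m v = \col_(j < s) (Q^T *m v) (widen_ord h j) 0.
Proof.
apply/matrixP => i j; rewrite (ord1 j) !mxE; apply: eq_bigr => l _.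
by rewrite !mxE.
Qed.

Lemma firstcols_orth m n s (h : (s <= n)%N) (Q : 'M[R]_(m, n)) :
  Q^T *m Q = 1%:M -> (firstcols h Q)^T *m firstcols h Q = 1%:M.
Proof.
move=> hQ; apply/matrixP => i j.
have := congr1 (fun M : 'M[R]_n => M (widen_ord h i) (widen_ord h j)) hQ => /=.
have e : (widen_ord h i == widen_ord h j) = (i == j).
  by apply/idP/idP => /eqP H; apply/eqP; [apply/val_inj; exact: (congr1 val H) | rewrite H].
rewrite !mxE e => <-.
apply: eq_bigr => l _; by rewrite !mxE.
Qed.

Lemma diag_sqrt_norm k (lam : nat -> R) (w : 'cV[R]_k) :
  (forall j, 0 <= lam j) ->
  vnorm (diag_mx (\row_(j < k) Num.sqrt (lam j)) *m w) ^+ 2 =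
  \sum_(j < k) lam j * w j 0 ^+ 2.
Proof.
move=> l0; rewrite vnorm_sqr; apply: eq_bigr => j _.
rewrite mul_diag_mx !mxE exprMn sqr_sqrtr //.
Qed.

End PartC.
Section PartC2.
Variable R : realType.

Lemma NT_eq d r k (Q : 'M[R]_(d, k)) (Qp : 'M[R]_(d, d - r)) (lam : nat -> R) (z : 'cV[R]_(d - r)) :
  (Qp^T *m Q *m diag_mx (\row_(j < k) Num.sqrt (lam j)))^T *m z =
  diag_mx (\row_(j < k) Num.sqrt (lam j)) *m (Q^T *m (Qp *m z)).
Proof. by rewrite !trmx_mul tr_diag_mx trmxK !mulmxA. Qed.

Lemma partC d r k (Q : 'M[R]_(d, k)) (lam : nat -> R)
  (Qr : 'M[R]_(d, r)) (Qp : 'M[R]_(d, d - r)) :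
  Q^T *m Q = 1%:M -> (forall j, 0 <= lam j) -> (forall j, lam j.+1 <= lam j) ->
  Qr^T *m Qr = 1%:M -> Qp^T *m Qp = 1%:M -> Qr^T *m Qp = 0 ->
  opnorm (Qp^T *m Q *m diag_mx (\row_(j < k) Num.sqrt (lam j))) ^+ 2 <=
  lam 0%N * sdist (firstcols (geq_minl r k) Qr) (firstcols (geq_minr r k) Q) ^+ 2
  + lam (minn r k).
Proof.
move=> hQ l0 lmono h1 h2 h3.
set s := minn r k.
set Qs' := firstcols (geq_minl r k) Qr.
set Qs := firstcols (geq_minr r k) Q.
set D := sdist Qs' Qs.
set N := Qp^T *m Q *m diag_mx (\row_(j < k) Num.sqrt (lam j)).
set K2 := lam 0%N * D ^+ 2 + lam s.
have D0 : 0 <= D by exact: opnorm_ge0.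
have K20 : 0 <= K2 by rewrite addr_ge0 ?mulr_ge0 ?sqr_ge0.
have hNT : forall z, vnorm (N^T *m z) ^+ 2 <= K2 * vnorm z ^+ 2.
  move=> z; rewrite /N NT_eq diag_sqrt_norm //.
  set v := Qp *m z; set w := Q^T *m v.
  have nv : vnorm v = vnorm z by rewrite iso_norm.
  have nw : vnorm w <= vnorm v by exact: bessel.
  have hv : Qr^T *m v = 0 by rewrite /v mulmxA h3 mul0mx.
  have hv' : Qs'^T *m v = 0.
    rewrite /Qs' firstcols_trmul hv; apply/matrixP => i j; by rewrite !mxE.
  have ns : vnorm (Qs^T *m v) <= D * vnorm v.
    rewrite -(iso_norm _ (firstcols_orth (geq_minr r k) hQ)) -/Qs.
    rewrite -vnormN; apply: le_trans (opnorm_ub _ _).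
    by rewrite mulmxBl mulmxA -(mulmxA Qs') hv' mulmx0 add0r mulmxA.
  have ns2 : \sum_(j < k | (j < s)%N) w j 0 ^+ 2 = vnorm (Qs^T *m v) ^+ 2.
    rewrite vnorm_sqr /Qs firstcols_trmul.
    rewrite (eq_bigl (fun j : 'I_k => predT j && (j < s)%N)) // (big_ord_narrow_cond (geq_minr r k)).
    by apply: eq_big => // i _; rewrite !mxE.
  rewrite (bigID (fun j : 'I_k => (j < s)%N)) /=.
  have e1 : \sum_(j < k | (j < s)%N) lam j * w j 0 ^+ 2 <= lam 0%N * (D * vnorm z) ^+ 2.
    apply: (@le_trans _ _ (\sum_(j < k | (j < s)%N) lam 0%N * w j 0 ^+ 2)).
      apply: ler_sum => j _; apply: ler_wpM2r; first exact: sqr_ge0.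
      exact: lam_mono.
    rewrite -mulr_sumr ns2 ler_wpM2l //; rewrite -nv.
    by rewrite lerXn2r ?nnegrE ?vnorm_ge0 ?mulr_ge0 ?vnorm_ge0.
  have e2 : \sum_(j < k | ~~ (j < s)%N) lam j * w j 0 ^+ 2 <= lam s * vnorm z ^+ 2.
    apply: (@le_trans _ _ (\sum_(j < k | ~~ (j < s)%N) lam s * w j 0 ^+ 2)).
      apply: ler_sum => j; rewrite -leqNgt => hj; apply: ler_wpM2r; first exact: sqr_ge0.
      exact: lam_mono.
    rewrite -mulr_sumr ler_wpM2l //.
    apply: (@le_trans _ _ (vnorm w ^+ 2)).
      rewrite vnorm_sqr [X in _ <= X](bigID (fun j : 'I_k => (j < s)%N)) /= lerDr.
      by apply: sumr_ge0 => j _; exact: sqr_ge0.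
    by rewrite -nv lerXn2r ?nnegrE ?vnorm_ge0.
  rewrite exprMn mulrA in e1; rewrite /K2 mulrDl; exact: lerD.
have hNT' : forall z, vnorm (N^T *m z) <= Num.sqrt K2 * vnorm z.
  move=> z; rewrite -(ger0_norm (vnorm_ge0 (N^T *m z))) -sqrtr_sqr.
  rewrite -(ger0_norm (vnorm_ge0 z)) -sqrtr_sqr -sqrtrM // ler_sqrt ?mulr_ge0 ?sqr_ge0 ?vnorm_ge0 //.
have hN := tr_bound (sqrtr_ge0 K2) hNT'.
have := opnorm_le (sqrtr_ge0 K2) hN => hC.
rewrite -/K2 -(sqr_sqrtr K20) lerXn2r ?nnegrE ?opnorm_ge0 ?sqrtr_ge0 //.
Qed.

End PartC2.
Section DAG.
Variable m : nat.
Variable pa : rel 'I_m.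
Hypothesis acyc : forall i j, pa i j -> ~~ connect pa j i.

Definition ancs (i : 'I_m) : {set 'I_m} := finset (fun j => connect pa j i).

Lemma ancs_lt i j : pa j i -> (#|ancs j| < #|ancs i|)%N.
Proof.
move=> hji.
have sub : ancs j \subset ancs i.
  apply/fintype.subsetP => x; rewrite !inE => hx.
  by apply: connect_trans hx (connect1 hji).
have pr : ancs j \proper ancs i.
  rewrite properE sub /=; apply/subsetPn; exists i; first by rewrite inE; exact: connect0.
  have hh : i \notin ancs j by rewrite inE; apply: acyc.
  exact: hh.
exact: proper_card pr.
Qed.

Lemma dag_ind (P : 'I_m -> Prop) :
  (forall i, (forall j, pa j i -> P j) -> P i) -> forall i, P i.
Proof.
move=> h i.
suff H : forall n i, (#|ancs i| < n)%N -> P i by exact: (H #|ancs i|.+1 i).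
elim => [|n IH] {}i hi; first by [].
apply: h => j hj; apply: IH.
by apply: leq_trans (ancs_lt hj) _.
Qed.

End DAG.
Section SolEq.
Variable R : realType.
Variables (m : nat) (E : Type) (A : E -> 'M[R]_m) (B : E -> 'I_m -> R)
  (pa : rel 'I_m) (pay : pred 'I_m) (sol : E -> 'cV[R]_m -> 'cV[R]_m) (w : 'cV[R]_m).
Hypothesis acyc : forall i j, pa i j -> ~~ connect pa j i.
Hypothesis Apa : forall e i j, A e i j != 0 -> pa j i.
Hypothesis wpay : forall j, w j 0 != 0 -> pay j.
Hypothesis solE : forall e v i, sol e v i 0 = mech (A e) (B e) i (sol e v) (v i 0).
Hypothesis spur : forall i, intervened A B i -> ~~ anc_y pa pay i.

Lemma anc_sol_eq i : anc_y pa pay i -> forall e e' v, sol e v i 0 = sol e' v i 0.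
Proof.
move: i; apply: (dag_ind acyc) => i IH hi e e' v.
have ni : ~ intervened A B i by move=> /spur; rewrite hi.
have me : mech (A e) (B e) i = mech (A e') (B e') i.
  by apply: NNPP => hne; apply: ni; exists e, e'.
rewrite solE me [RHS]solE /mech; congr (_ + _); apply: eq_bigr => j _.
have [->|nz] := eqVneq (A e' i j) 0; first by rewrite !mul0r.
have pj := Apa nz; congr (_ * _); apply: IH => //.
move/existsP: hi => [k /andP [pk ck]]; apply/existsP; exists k.
by rewrite pk /=; apply: connect_trans (connect1 pj) ck.
Qed.

Lemma y_eq e e' v : dotv w (sol e v) = dotv w (sol e' v).
Proof.
rewrite !dotvE; apply: eq_bigr => j _.
have [->|nz] := eqVneq (w j 0) 0; first by rewrite !mul0r.
congr (_ * _); apply: anc_sol_eq; apply/existsP; exists j.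
by rewrite wpay //=; exact: connect0.
Qed.

End SolEq.
Section L2sec.
Variable R : realType.
Variables (dT : measure_display) (T : measurableType dT) (mu : probability T R).

Definition L2 (f : T -> R) := measurable_fun setT f /\
  mu.-integrable setT (fun t => (f t ^+ 2)%:E).

Lemma int_cst (c : R) : mu.-integrable setT (fun _ : T => c%:E).
Proof. exact: (@finite_measure_integrable_cst _ _ _ mu _ c measurableT). Qed.

Lemma int_le (f g : T -> R) : measurable_fun setT f ->
  (forall t, `|f t| <= g t) -> mu.-integrable setT (fun t => (g t)%:E) ->
  mu.-integrable setT (fun t => (f t)%:E).
Proof.
move=> mf h ig; apply: (le_integrable measurableT _ _ ig).
  exact/measurable_EFinP.
move=> t _; rewrite !abse_EFin lee_fin; apply: le_trans (h t) _.
exact: ler_norm.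
Qed.

Lemma int_add (f g : T -> R) : mu.-integrable setT (fun t => (f t)%:E) ->
  mu.-integrable setT (fun t => (g t)%:E) ->
  mu.-integrable setT (fun t => (f t + g t)%:E).
Proof. by move=> a b; have := integrableD measurableT a b; apply: (eq_integrable measurableT). Qed.

Lemma int_scale (c : R) (f : T -> R) : mu.-integrable setT (fun t => (f t)%:E) ->
  mu.-integrable setT (fun t => (c * f t)%:E).
Proof. by move=> a; have := integrableZl measurableT c a; apply: (eq_integrable measurableT). Qed.

Lemma L2_cst c : L2 (fun _ => c).
Proof. by split; [exact: measurable_cst | exact: int_cst]. Qed.

Lemma L2_add f g : L2 f -> L2 g -> L2 (fun t => f t + g t).
Proof.
move=> [mf if_] [mg ig]; split; first exact: measurable_funD.
apply: (int_le (g := fun t => 2 * f t ^+ 2 + 2 * g t ^+ 2)).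
- by apply: measurable_funX; exact: measurable_funD.
- move=> t; rewrite ger0_norm ?sqr_ge0 //.
  have := sqr_ge0 (f t - g t); nra.
- by apply: int_add; apply: int_scale.
Qed.

Lemma L2_scale c f : L2 f -> L2 (fun t => c * f t).
Proof.
move=> [mf if_]; split; first by apply: measurable_funM => //; exact: measurable_cst.
have := int_scale (c ^+ 2) if_; apply: (eq_integrable measurableT) => t _.
by rewrite exprMn.
Qed.

Lemma L2_sum (I : Type) (s : seq I) (F : I -> T -> R) :
  (forall i, L2 (F i)) -> L2 (fun t => \sum_(i <- s) F i t).
Proof.
move=> h; elim: s => [|x s IH].
  by under [fun t => _]funext do rewrite big_nil; exact: L2_cst.
under [fun t => _]funext do rewrite big_cons; exact: L2_add.
Qed.

Lemma L2_ext f g : (forall t, f t = g t) -> L2 f -> L2 g.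
Proof. by move=> e; rewrite (funext e). Qed.

Lemma L2_mul_int f g : L2 f -> L2 g -> mu.-integrable setT (fun t => (f t * g t)%:E).
Proof.
move=> [mf if_] [mg ig].
apply: (int_le (g := fun t => f t ^+ 2 + g t ^+ 2)).
- exact: measurable_funM.
- move=> t; rewrite normrM.
  have := sqr_ge0 (`|f t| - `|g t|); rewrite -(real_normK (num_real (f t))).
  rewrite -(real_normK (num_real (g t))); nra.
- exact: int_add.
Qed.

Lemma L2_abs_int f : L2 f -> mu.-integrable setT (fun t => (`|f t|)%:E).
Proof.
move=> [mf if_].
apply: (int_le (g := fun t => 1 + f t ^+ 2)).
- by apply: measurableT_comp => //; exact: normr_measurable.
- move=> t; rewrite normr_id -(real_normK (num_real (f t))).
  have := normr_ge0 (f t); have := sqr_ge0 (`|f t| - 1); nra.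
- exact: int_add (int_cst 1) if_.
Qed.

Lemma Rint_sum (I : Type) (s : seq I) (F : I -> T -> R) :
  (forall i, mu.-integrable setT (fun t => (F i t)%:E)) ->
  mu.-integrable setT (fun t => (\sum_(i <- s) F i t)%:E) /\
  Rintegral mu setT (fun t => \sum_(i <- s) F i t) =
  \sum_(i <- s) Rintegral mu setT (F i).
Proof.
move=> h; elim: s => [|x s [IH1 IH2]].
  split.
    by apply: (eq_integrable measurableT _ _ _ (int_cst 0)) => t _; rewrite big_nil.
  rewrite big_nil (@eq_Rintegral _ _ _ mu setT (fun _ => 0)); last by move=> t _; rewrite big_nil.
  by rewrite Rintegral_cst // mul0r.
split.
  by apply: (eq_integrable measurableT _ _ _ (int_add (h x) IH1)) => t _; rewrite big_cons.
rewrite big_cons (@eq_Rintegral _ _ _ mu setT (fun t => F x t + \sum_(i <- s) F i t)); last first.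
  by move=> t _; rewrite big_cons.
rewrite RintegralD //; last exact: (h x).
have := IH2 => /(congr1 (fun z => Rintegral mu setT (F x) + z)).
apply: etrans. reflexivity.
Qed.

Lemma RintZ c f : mu.-integrable setT (fun t => (f t)%:E) ->
  Rintegral mu setT (fun t => c * f t) = c * Rintegral mu setT f.
Proof. by move=> h; rewrite RintegralZl. Qed.

End L2sec.
Section Quad.
Variable R : realType.
Variables (dT : measure_display) (T : measurableType dT) (mu : probability T R).

Lemma Rint_quad n (th : 'cV[R]_n) (X : 'I_n -> T -> R) :
  (forall a, L2 mu (X a)) ->
  Rintegral mu setT (fun t => (\sum_a th a 0 * X a t) ^+ 2) =
  \sum_a \sum_b th a 0 * th b 0 * Rintegral mu setT (fun t => X a t * X b t).
Proof.
move=> hX.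
have e : forall t, (\sum_a th a 0 * X a t) ^+ 2 =
    \sum_a \sum_b th a 0 * th b 0 * (X a t * X b t).
  move=> t; rewrite expr2 mulr_suml; apply: eq_bigr => a _.
  rewrite mulr_sumr; apply: eq_bigr => b _; ring.
rewrite (@eq_Rintegral _ _ _ mu setT (fun t => \sum_a \sum_b th a 0 * th b 0 * (X a t * X b t)));
  last by move=> t _; rewrite e.
have hi : forall a b, mu.-integrable setT (fun t => (th a 0 * th b 0 * (X a t * X b t))%:E).
  by move=> a b; apply: int_scale; apply: L2_mul_int.
have hi2 : forall a, mu.-integrable setT
    (fun t => (\sum_b th a 0 * th b 0 * (X a t * X b t))%:E).
  by move=> a; case: (Rint_sum (index_enum _) (hi a)).
case: (Rint_sum (index_enum _) hi2) => _ ->; apply: eq_bigr => a _.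
case: (Rint_sum (index_enum _) (hi a)) => _ ->; apply: eq_bigr => b _.
by rewrite RintZ //; apply: L2_mul_int.
Qed.

End Quad.

Section SolL2.
Variable R : realType.
Variables (dT : measure_display) (T : measurableType dT) (mu : probability T R).
Variables (m : nat) (u : T -> 'cV[R]_m) (E : Type) (A : E -> 'M[R]_m) (B : E -> 'I_m -> R)
  (pa : rel 'I_m) (sol : E -> 'cV[R]_m -> 'cV[R]_m).
Hypothesis um : forall i, measurable_fun setT (fun t => u t i 0).
Hypothesis ui : forall i, mu.-integrable setT (fun t => ((u t i 0) ^+ 2)%:E).
Hypothesis acyc : forall i j, pa i j -> ~~ connect pa j i.
Hypothesis Apa : forall e i j, A e i j != 0 -> pa j i.
Hypothesis solE : forall e v i, sol e v i 0 = mech (A e) (B e) i (sol e v) (v i 0).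

Lemma sol_L2 e i : L2 mu (fun t => sol e (u t) i 0).
Proof.
move: i; apply: (dag_ind acyc) => i IH.
apply: (@L2_ext _ _ _ mu (fun t => \sum_j A e i j * sol e (u t) j 0 + B e i * u t i 0)).
  by move=> t; rewrite solE.
apply: L2_add; last by apply: L2_scale; split.
apply: L2_sum => j.
have [->|nz] := eqVneq (A e i j) 0.
  by apply: (L2_ext (f := fun _ => 0)) => [t|]; [rewrite mul0r | exact: L2_cst].
by apply: L2_scale; apply: IH; apply: Apa nz.
Qed.

Lemma Gsol_L2 d (G : 'M[R]_(d, m)) e a : L2 mu (fun t => (G *m sol e (u t)) a 0).
Proof.
apply: (L2_ext (f := fun t => \sum_b G a b * sol e (u t) b 0)).
  by move=> t; rewrite mxE.
by apply: L2_sum => b; apply: L2_scale; exact: sol_L2.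
Qed.

End SolL2.
Section Loss.
Variable R : realType.

Lemma lossLL_ge0 (t y : R) : 0 <= lossLL t y.
Proof. by rewrite /lossLL ln_ge0 // lerDl expR_ge0. Qed.

Lemma lossSE_ge0 (t y : R) : 0 <= lossSE t y.
Proof. exact: sqr_ge0. Qed.

Lemma sgn1_norm (x : R) : `|sgn1 x| = 1.
Proof. by rewrite /sgn1; case: ifP => _; rewrite ?normrN normr1. Qed.

Lemma lossLL_lip (t t' y : R) : `|y| <= 1 -> lossLL t y <= lossLL t' y + `|t - t'|.
Proof.
move=> hy; rewrite /lossLL.
set a := - (y * t); set b := - (y * t'); set dl := `|t - t'|.
have hab : a <= b + dl.
  have : a - b = y * (t' - t) by rewrite /a /b; ring.
  move=> e; rewrite -lerBlDl e; apply: le_trans (ler_norm _) _.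
  rewrite normrM distrC -[X in _ <= X]mul1r ler_wpM2r //.
have pos1 : forall z : R, 0 < 1 + expR z by move=> z; rewrite ltr_wpDr ?expR_ge0.
rewrite -[dl in X in _ <= X]expRK -lnM ?posrE ?expR_gt0 //.
rewrite ler_ln ?posrE ?mulr_gt0 ?expR_gt0 //.
rewrite mulrDl mul1r; apply: lerD.
  by rewrite -expR0 ler_expR /dl normr_ge0.
by rewrite -expRD ler_expR.
Qed.

Lemma lossSE_ineq (t t' y : R) : lossSE t y <= 2 * lossSE t' y + 2 * (t - t') ^+ 2.
Proof.
rewrite /lossSE.
have := sqr_ge0 ((t' - y) - (t - t')); nra.
Qed.

Lemma sgn1_meas (dT : measure_display) (T : measurableType dT) (f : T -> R) :
  measurable_fun setT f -> measurable_fun setT (fun t => sgn1 (f t)).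
Proof.
move=> mf; rewrite /sgn1; apply: measurable_fun_ifT; last 2 first.
- exact: measurable_cst.
- exact: measurable_cst.
by apply: measurable_fun_ler => //; exact: measurable_cst.
Qed.

Lemma lossLL_meas (dT : measure_display) (T : measurableType dT) (f g : T -> R) :
  measurable_fun setT f -> measurable_fun setT g ->
  measurable_fun setT (fun t => lossLL (f t) (g t)).
Proof.
move=> mf mg; rewrite /lossLL.
apply: measurableT_comp; first exact: measurable_ln.
apply: measurable_funD; first exact: measurable_cst.
apply: measurableT_comp; first exact: measurable_expR.
by apply: measurable_funN; apply: measurable_funM.
Qed.

Lemma lossSE_meas (dT : measure_display) (T : measurableType dT) (f g : T -> R) :
  measurable_fun setT f -> measurable_fun setT g ->
  measurable_fun setT (fun t => lossSE (f t) (g t)).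
Proof.
move=> mf mg; rewrite /lossSE.
by apply: measurable_funX; apply: measurable_funB.
Qed.

End Loss.
Section EReal.
Variable R : realType.
Local Open Scope ereal_scope.

Lemma wavg n (pw : 'I_n -> R) (F : \bar R) (a : 'I_n -> \bar R) (b : 'I_n -> R) :
  (forall j, (0 <= pw j)%R) -> (\sum_j pw j = 1)%R -> 0 <= F ->
  (forall j, F <= a j + (b j)%:E) ->
  F <= \sum_j (pw j)%:E * a j + (\sum_j pw j * b j)%:E.
Proof.
move=> p0 p1 F0 h.
have -> : F = \sum_j (pw j)%:E * F.
  by rewrite -ge0_sume_distrl ?sumEFin ?p1 ?mul1e // => j _; rewrite lee_fin.
rewrite -sumEFin -big_split /=; apply: lee_sum => j _.
rewrite EFinM -muleDr // ?fin_num_adde_defl //.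
by apply: lee_wpmul2l; rewrite ?lee_fin.
Qed.

End EReal.

Section IntBound.
Variable R : realType.
Variables (dT : measure_display) (T : measurableType dT) (mu : probability T R).
Local Open Scope ereal_scope.

Lemma int_bound (c : R) (f g h : T -> R) : (0 <= c)%R ->
  (forall t, 0 <= f t)%R -> (forall t, 0 <= g t)%R -> (forall t, 0 <= h t)%R ->
  measurable_fun setT f -> measurable_fun setT g ->
  mu.-integrable setT (fun t => (h t)%:E) ->
  (forall t, f t <= c * g t + h t)%R ->
  \int[mu]_t (f t)%:E <= c%:E * \int[mu]_t (g t)%:E + (Rintegral mu setT h)%:E.
Proof.
move=> c0 f0 g0 h0 mf mg ih hf.
have mh : measurable_fun setT h by case/integrableP: ih => /measurable_EFinP.
apply: (@le_trans _ _ (\int[mu]_t ((c * g t)%:E + (h t)%:E))).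
  apply: ge0_le_integral => //.
  - by move=> t _; rewrite lee_fin.
  - exact/measurable_EFinP.
  - apply: emeasurable_funD; apply/measurable_EFinP => //.
    by apply: measurable_funM => //; exact: measurable_cst.
  - by move=> t _; rewrite -EFinD lee_fin.
rewrite ge0_integralD //.
- rewrite (_ : (fun t => (c * g t)%:E) = (fun t => c%:E * (g t)%:E)); last first.
    by apply/funext => t; rewrite EFinM.
  rewrite ge0_integralZl_EFin //.
  + rewrite /Rintegral fineK //; exact: integrable_fin_num.
  + by move=> t _; rewrite lee_fin.
  + exact/measurable_EFinP.
- by move=> t _; rewrite lee_fin mulr_ge0.
- apply/measurable_EFinP; apply: measurable_funM => //; exact: measurable_cst.
- by move=> t _; rewrite lee_fin.
- exact/measurable_EFinP.
Qed.

End IntBound.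
Section AMGM.
Variable R : realType.
Variables (dT : measure_display) (T : measurableType dT) (mu : probability T R).

Lemma Rint_abs_le (f : T -> R) (c : R) : 0 < c -> L2 mu f ->
  Rintegral mu setT (fun t => `|f t|) <=
  (2 * c)^-1 * Rintegral mu setT (fun t => f t ^+ 2) + c / 2.
Proof.
move=> c0 hf.
have i2 : mu.-integrable setT (fun t => (f t ^+ 2)%:E) by case: hf.
apply: (@le_trans _ _ (Rintegral mu setT (fun t => (2 * c)^-1 * f t ^+ 2 + c / 2))).
  apply: le_Rintegral => //.
  - exact: L2_abs_int.
  - exact: int_add (int_scale _ i2) (int_cst _ _).
  - move=> t _.
    have h : `|f t| * (2 * c) <= f t ^+ 2 + c ^+ 2.
      rewrite -(real_normK (num_real (f t))).
      have := sqr_ge0 (`|f t| - c); nra.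
    rewrite -(ler_pM2r (_ : 0 < 2 * c)) ?mulr_gt0 //.
    have -> : ((2 * c)^-1 * f t ^+ 2 + c / 2) * (2 * c) = f t ^+ 2 + c ^+ 2.
      by field; rewrite gt_eqF.
    exact: h.
rewrite RintegralD //; first last.
- exact: int_cst.
- exact: int_scale.
rewrite (@RintZ _ _ _ mu ((2 * c)^-1) (fun t => f t ^+ 2)) //.
rewrite Rintegral_cst //.
have -> : fine (mu [set: T]) = 1 by rewrite (probability_setT mu).
by rewrite mulr1.
Qed.

End AMGM.
Section Helpers.
Variable R : realType.

Lemma mxBE m n (A B : 'M[R]_(m, n)) i j : (A - B) i j = A i j - B i j.
Proof. by rewrite !mxE. Qed.

Lemma amgm_fin (S q K : R) : 0 <= S -> 0 <= K -> q <= K ^+ 2 ->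
  (forall c, 0 < c -> S <= (2 * c)^-1 * q + c / 2) -> S <= K.
Proof.
move=> S0 K0 qK h.
have [Kp|] := ltP 0 K.
  apply: le_trans (h K Kp) _.
  have : (2 * K)^-1 * q <= (2 * K)^-1 * K ^+ 2.
    by rewrite ler_wpM2l // invr_ge0 mulr_ge0.
  have -> : (2 * K)^-1 * K ^+ 2 = K / 2 by field; rewrite gt_eqF.
  lra.
move=> K0'; have Kz : K = 0 by apply/eqP; rewrite eq_le K0' K0.
rewrite Kz in qK; rewrite Kz.
have [Sp|] := ltP 0 S; last by [].
have := h S Sp.
have q0 : q <= 0 by move: qK; rewrite expr0n.
have : (2 * S)^-1 * q <= 0 by rewrite mulr_ge0_le0 // ?invr_ge0 ?mulr_ge0.
lra.
Qed.

End Helpers.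

Unset Implicit Arguments.

Theorem theorem1
  (R : realType)
  (* probability space carrying the shared exogenous noise u ~ P_U *)
  (dT : measure_display) (T : measurableType dT) (mu : probability T R)
  (m d : nat) (u : T -> 'cV[R]_m)
  (* domains, linear latent mechanisms, DAG, solution maps *)
  (E : Type) (A : E -> 'M[R]_m) (B : E -> 'I_m -> R)
  (pa : rel 'I_m) (pay : pred 'I_m)
  (sol : E -> 'cV[R]_m -> 'cV[R]_m)
  (* shared linear observation mechanism g_x and linear map w of g_y *)
  (G : 'M[R]_(d, m)) (w : 'cV[R]_m)
  (* training domains with weights, test domain *)
  (ntr : nat) (trd : 'I_ntr -> E) (pw : 'I_ntr -> R) (ep : E)
  (* eigendecomposition M_{e+} = Q Lambda Q^T *)
  (k : nat) (Q : 'M[R]_(d, k)) (lam : nat -> R)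
  (* NCM data *)
  (np : nat) (Dt : 'M[R]_(d, np)) (r : nat)
  (Qr : 'M[R]_(d, r)) (Qp : 'M[R]_(d, d - r)) (sr : nat -> R) (sp : nat -> R)
  (theta : 'cV[R]_d) :
  (* noise: measurable coordinates with finite second moments *)
  (forall i, measurable_fun setT (fun t => u t i 0)) ->
  (forall i, mu.-integrable setT (fun t => ((u t i 0) ^+ 2)%:E)) ->
  (* DAG structure *)
  (forall i j, pa i j -> ~~ connect pa j i) ->
  (forall e i j, A e i j != 0 -> pa j i) ->
  (forall j, w j 0 != 0 -> pay j) ->
  (* sol e is the solution map u |-> z of the SCM of domain e *)
  (forall e v i, sol e v i 0 = mech (A e) (B e) i (sol e v) (v i 0)) ->
  (* spurious correlation assumption *)
  (forall i, intervened A B i -> ~~ anc_y pa pay i) ->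
  (* training weights *)
  (forall j, 0 <= pw j) -> \sum_j pw j = 1 ->
  (* M_{e+} = Q Lambda Q^T, orthonormal Q with |I(F_E)| columns, sorted eigenvalues *)
  k = #|interv_set A B| ->
  Q^T *m Q = 1%:M ->
  (forall j, 0 <= lam j) -> (forall j, lam j.+1 <= lam j) ->
  (forall j, (k <= j)%N -> lam j = 0) ->
  \matrix_(a < d, b < d)
      (\sum_j pw j * Rintegral mu setT (fun t =>
          (G *m (sol ep (u t) - sol (trd j) (u t))) a 0 *
          (G *m (sol ep (u t) - sol (trd j) (u t))) b 0))
    = Q *m diag_mx (\row_(j < k) lam j) *m Q^T ->
  (* Qr: left singular vectors of Dt for the r largest singular values (sorted),
     Qp: orthonormal basis of the orthogonal complement *)
  Qr^T *m Qr = 1%:M -> Qp^T *m Qp = 1%:M -> Qr^T *m Qp = 0 ->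
  Dt *m Dt^T *m Qr = Qr *m diag_mx (\row_(j < r) sr j) ->
  Dt *m Dt^T *m Qp = Qp *m diag_mx (\row_(j < d - r) sp j) ->
  (forall j, (j.+1 < r)%N -> sr j.+1 <= sr j) ->
  (forall i j, (i < r)%N -> (j < d - r)%N -> sp j <= sr i) ->
  (* NCM constraint *)
  theta^T *m Qr = 0 ->
  let C := opnorm (Qp^T *m Q *m diag_mx (\row_(j < k) Num.sqrt (lam j))) in
  (* (a) logistic regression, y = sign(w^T z) *)
  (\int[mu]_t (lossLL (dotv theta (G *m sol ep (u t)))
                        (sgn1 (dotv w (sol ep (u t)))))%:E
    <= \sum_(j < ntr) (pw j)%:E *
         \int[mu]_t (lossLL (dotv theta (G *m sol (trd j) (u t)))
                            (sgn1 (dotv w (sol (trd j) (u t)))))%:E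
       + (vnorm theta * C)%:E)%E
  /\
  (* (b) linear regression, y = w^T z *)
  (\int[mu]_t (lossSE (dotv theta (G *m sol ep (u t)))
                        (dotv w (sol ep (u t))))%:E
    <= 2%:E * (\sum_(j < ntr) (pw j)%:E *
         \int[mu]_t (lossSE (dotv theta (G *m sol (trd j) (u t)))
                            (dotv w (sol (trd j) (u t))))%:E)
       + (2 * vnorm theta ^+ 2 * C ^+ 2)%:E)%E
  /\
  (* perturbation bound, s = min(r, |I(F_E)|) *)
  C ^+ 2 <= lam 0%N * sdist (firstcols (geq_minl r k) Qr)
                            (firstcols (geq_minr r k) Q) ^+ 2
            + lam (minn r k).
Proof.
move=> um ui acyc Apa wpay solE spur pw0 pw1 hk hQ l0 lmono lk hM h1 h2 h3
  hsr hsp hsrm hsrsp hth C.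
have C0 : 0 <= C by exact: opnorm_ge0.
have hth' : Qr^T *m theta = 0.
  by rewrite -(trmxK (Qr^T *m theta)) trmx_mul trmxK hth trmx0.
set z := Qp^T *m theta.
have thz : theta = Qp *m z.
  apply/eqP; rewrite -subr_eq0; apply/eqP; apply: (span0 h1 h2 h3).
    by rewrite mulmxBr hth' mulmxA h3 mul0mx subrr.
  by rewrite mulmxBr (mulmxA Qp^T Qp z) h2 mul1mx subrr.
have nz : vnorm z = vnorm theta by rewrite [in RHS]thz iso_norm.
set Lh := diag_mx (\row_(j < k) Num.sqrt (lam j)).
set N := Qp^T *m Q *m Lh.
have bNT : vnorm (N^T *m z) <= C * vnorm theta.
  rewrite -nz; apply: (tr_bound C0) => x; rewrite trmxK; exact: opnorm_ub.
pose X j a t := (G *m (sol ep (u t) - sol (trd j) (u t))) a 0.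
pose Dth j t := dotv theta (G *m sol ep (u t)) - dotv theta (G *m sol (trd j) (u t)).
have DthE : forall j t, Dth j t = \sum_a theta a 0 * X j a t.
  move=> j t; rewrite /Dth /X !dotvE -sumrB; apply: eq_bigr => a _.
  by rewrite mulmxBr mxBE mulrBr.
have GL2 : forall e a, L2 mu (fun t => (G *m sol e (u t)) a 0).
  by move=> e a; apply: (Gsol_L2 um ui acyc Apa solE).
have XL2 : forall j a, L2 mu (X j a).
  move=> j a; apply: (L2_ext (f := fun t => (G *m sol ep (u t)) a 0 +
      (-1) * (G *m sol (trd j) (u t)) a 0)).
    by move=> t; rewrite /X mulmxBr mxBE mulN1r.
  by apply: L2_add; [exact: GL2 | apply: L2_scale; exact: GL2].
have DL2 : forall j, L2 mu (Dth j).
  move=> j; apply: (L2_ext (f := fun t => \sum_a theta a 0 * X j a t)).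
    by move=> t; rewrite DthE.
  by apply: L2_sum => a; apply: L2_scale.
have RDth : forall j, Rintegral mu setT (fun t => Dth j t ^+ 2) =
    \sum_a \sum_b theta a 0 * theta b 0 *
      Rintegral mu setT (fun t => X j a t * X j b t).
  move=> j; rewrite -Rint_quad //.
  by apply: eq_Rintegral => t _; rewrite DthE.
have LL : diag_mx (\row_(j < k) lam j) = Lh *m Lh.
  rewrite /Lh mulmx_diag; congr diag_mx; apply/matrixP => i j.
  by rewrite !mxE -expr2 sqr_sqrtr.
have Qf : \sum_j pw j * Rintegral mu setT (fun t => Dth j t ^+ 2) =
    vnorm (N^T *m z) ^+ 2.
  have e1 : vnorm (N^T *m z) ^+ 2 = dotv theta ((Q *m diag_mx (\row_(j < k) lam j) *m Q^T) *m theta).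
    rewrite LL /N NT_eq -/Lh -thz -dotvv.
    rewrite (_ : Q *m (Lh *m Lh) *m Q^T *m theta = (Q *m Lh) *m (Lh *m (Q^T *m theta))); last first.
      by rewrite !mulmxA.
    by rewrite dotv_sym dotv_mul trmx_mul tr_diag_mx mulmxA.
  rewrite e1 -hM dotvE.
  under [RHS]eq_bigr => a _ do rewrite mxE mulr_sumr.
  under [RHS]eq_bigr => a _ do under eq_bigr => b _ do rewrite mxE mulr_suml mulr_sumr.
  under [RHS]eq_bigr => a _ do rewrite exchange_big /=.
  rewrite exchange_big /=; apply: eq_bigr => j _.
  rewrite RDth mulr_sumr; apply: eq_bigr => a _.
  rewrite mulr_sumr; apply: eq_bigr => b _.
  rewrite /X; ring.
have Qb : \sum_j pw j * Rintegral mu setT (fun t => Dth j t ^+ 2) <=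
    (vnorm theta * C) ^+ 2.
  by rewrite Qf [_ * C]mulrC lerXn2r ?nnegrE ?mulr_ge0 ?vnorm_ge0.
have TL2 : forall e, L2 mu (fun t => dotv theta (G *m sol e (u t))).
  move=> e; apply: (L2_ext (f := fun t => \sum_a theta a 0 * (G *m sol e (u t)) a 0)).
    by move=> t; rewrite dotvE.
  by apply: L2_sum => a; apply: L2_scale; exact: GL2.
have WL2 : forall e, L2 mu (fun t => dotv w (sol e (u t))).
  move=> e; apply: (L2_ext (f := fun t => \sum_a w a 0 * sol e (u t) a 0)).
    by move=> t; rewrite dotvE.
  by apply: L2_sum => a; apply: L2_scale; exact: (sol_L2 um ui acyc Apa solE).
have yE : forall j t, dotv w (sol ep (u t)) = dotv w (sol (trd j) (u t)).
  by move=> j t; apply: (y_eq acyc Apa wpay solE spur).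
have pq0 : forall j, 0 <= pw j * Rintegral mu setT (fun t => `|Dth j t|).
  by move=> j; rewrite mulr_ge0 // Rintegral_ge0.
split.
  have stepA : forall j,
      (\int[mu]_t (lossLL (dotv theta (G *m sol ep (u t)))
                        (sgn1 (dotv w (sol ep (u t)))))%:E <=
      \int[mu]_t (lossLL (dotv theta (G *m sol (trd j) (u t)))
                            (sgn1 (dotv w (sol (trd j) (u t)))))%:E +
      (Rintegral mu setT (fun t => `|Dth j t|))%:E)%E.
    move=> j; rewrite -[X in (_ <= X + _)%E]mul1e.
    have mf : measurable_fun setT (fun t => lossLL (dotv theta (G *m sol ep (u t)))
                        (sgn1 (dotv w (sol ep (u t))))).
      apply: lossLL_meas; first by case: (TL2 ep).
      by apply: sgn1_meas; case: (WL2 ep).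
    have mg : measurable_fun setT (fun t => lossLL (dotv theta (G *m sol (trd j) (u t)))
                        (sgn1 (dotv w (sol (trd j) (u t))))).
      apply: lossLL_meas; first by case: (TL2 (trd j)).
      by apply: sgn1_meas; case: (WL2 (trd j)).
    apply: (int_bound ler01 (fun t => lossLL_ge0 _ _) (fun t => lossLL_ge0 _ _)
      (fun t => normr_ge0 (Dth j t)) mf mg (L2_abs_int (DL2 j))).
    by move=> t; rewrite mul1r (yE j t); apply: lossLL_lip; rewrite sgn1_norm.
  apply: le_trans (wavg pw0 pw1 _ stepA) _.
    by apply: integral_ge0 => t _; rewrite lee_fin lossLL_ge0.
  apply: leeD => //; rewrite lee_fin.
  apply: (amgm_fin (q := \sum_j pw j * Rintegral mu setT (fun t => Dth j t ^+ 2))) => //.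
  - exact: sumr_ge0.
  - by rewrite mulr_ge0 ?vnorm_ge0.
  move=> c c0.
  apply: (@le_trans _ _ (\sum_j pw j * ((2 * c)^-1 *
      Rintegral mu setT (fun t => Dth j t ^+ 2) + c / 2))).
    apply: ler_sum => j _; apply: ler_wpM2l => //; exact: Rint_abs_le.
  under eq_bigr => j _ do rewrite mulrDr.
  rewrite big_split /= -mulr_suml pw1 mul1r mulr_sumr lerD2r.
  by apply: ler_sum => j _; rewrite mulrCA.
split; last by rewrite /C; apply: partC.
have stepB : forall j,
    (\int[mu]_t (lossSE (dotv theta (G *m sol ep (u t)))
                      (dotv w (sol ep (u t))))%:E <=
    2%:E * \int[mu]_t (lossSE (dotv theta (G *m sol (trd j) (u t)))
                          (dotv w (sol (trd j) (u t))))%:E +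
    (2 * Rintegral mu setT (fun t => Dth j t ^+ 2))%:E)%E.
  move=> j.
  have mf : measurable_fun setT (fun t => lossSE (dotv theta (G *m sol ep (u t)))
                      (dotv w (sol ep (u t)))).
    by apply: lossSE_meas; [case: (TL2 ep) | case: (WL2 ep)].
  have mg : measurable_fun setT (fun t => lossSE (dotv theta (G *m sol (trd j) (u t)))
                      (dotv w (sol (trd j) (u t)))).
    by apply: lossSE_meas; [case: (TL2 (trd j)) | case: (WL2 (trd j))].
  have i2 : mu.-integrable setT (fun t => (Dth j t ^+ 2)%:E) by case: (DL2 j).
  rewrite -RintZ //.
  apply: (int_bound (ler0n R 2) (fun t => lossSE_ge0 _ _) (fun t => lossSE_ge0 _ _)
    (fun t => mulr_ge0 (ler0n R 2) (sqr_ge0 (Dth j t))) mf mg (int_scale 2 i2)).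
  by move=> t; rewrite (yE j t); apply: lossSE_ineq.
apply: le_trans (wavg pw0 pw1 _ stepB) _.
  by apply: integral_ge0 => t _; rewrite lee_fin lossSE_ge0.
apply: leeD.
  rewrite ge0_sume_distrr; last first.
    by move=> j _; rewrite mule_ge0 ?lee_fin ?integral_ge0 // => t _; rewrite lee_fin lossSE_ge0.
  by apply: lee_sum => j _; rewrite muleCA.
rewrite lee_fin.
under eq_bigr => j _ do rewrite mulrCA.
rewrite -mulr_sumr -mulrA ler_wpM2l // -exprMn.
exact: Qb.
Qed.
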